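(* Let $H$ be a Hilbert space and consider the Cauchy problem $\dot{u}=A(t)u+F(t,u)$, $t\ge 0$, $u(0)=u_0$, for a function $u(t)$ with values in $H$, where $\dot u := \frac{du}{dt}$. Assume that $A(t)$ is a bounded linear operator in $H$ satisfying $\mathrm{Re}(A(t)u,u)\le -k\|u\|^2$ for all $u\in H$ and all $t\ge 0$, where $k>0$ is a constant, and that $F(t,u)$ is a nonlinear map in $H$ satisfying $\|F(t,u)\|\le c_0\|u\|^p$, where $c_0>0$ and $p>1$ are constants. Then the solution to this problem satisfies the estimate $\|u(t)\|=O(e^{-(k-\epsilon)t})$ as $t\to\infty$. Here $0<\epsilon<k$ can be chosen arbitrarily small if $\|u_0\|$ is sufficiently small.
   Context: Hilbert space $H$; $A(t)$ a bounded linear dissipative operator; the problem is $\dot{u}=A(t)u+F(t,u)+b(t)$, $u(0)=u_0$, with the persistently acting perturbation $b(t)=0$. *)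

(* Defs.v *)
From HB Require Import structures.
From mathcomp Require Import all_boot all_order all_algebra.
From mathcomp Require Import all_classical all_reals all_analysis.
Set Implicit Arguments. Unset Strict Implicit. Unset Printing Implicit Defensive.
Import Order.TTheory GRing.Theory Num.Theory.
Import numFieldNormedType.Exports.
Local Open Scope ring_scope.

(* [ip] is a (real) inner product on the normed space V inducing its norm:
   symmetric, bilinear, and (u,u) = ||u||^2.  Together with completeness of V
   this makes V a (real) Hilbert space. *)
Definition is_inner_product (R : realType) (V : normedModType R)
  (ip : V -> V -> R) : Prop :=
  [/\ forall u v, ip u v = ip v u,
      forall a u v w, ip (a *: u + v) w = a * ip u w + ip v w
    & forall u, ip u u = `|u| ^+ 2].

Definition bounded_op (R : realType) (V : normedModType R)
  (B : {linear V -> V}) : Prop :=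
  exists M : R, forall u, `|B u| <= M * `|u|.

(* Main.v *)
Require Import Defs.
From HB Require Import structures.
From mathcomp Require Import all_boot all_order all_algebra.
From mathcomp Require Import all_classical all_reals all_analysis.
From mathcomp Require Import ring lra.
Import Order.TTheory GRing.Theory Num.Theory.
Import numFieldNormedType.Exports.
Local Open Scope classical_set_scope.
Local Open Scope ring_scope.
Set Implicit Arguments. Unset Strict Implicit.

Section IP.
Variables (R : realType) (H : normedModType R) (ip : H -> H -> R).
Hypothesis hip : is_inner_product ip.

Lemma ipC u v : ip u v = ip v u. Proof. by case: hip. Qed.
Lemma ipp u : ip u u = `|u| ^+ 2. Proof. by case: hip. Qed.
Lemma ipDl u v w : ip (u + v) w = ip u w + ip v w.
Proof. by case: hip => _ h _; rewrite -[u]scale1r h mul1r scale1r. Qed.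
Lemma ip0l w : ip 0 w = 0.
Proof. have := ipDl 0 0 w; rewrite addr0 => h; lra. Qed.
Lemma ipZl a u w : ip (a *: u) w = a * ip u w.
Proof. by case: hip => _ h _; rewrite -[a *: u]addr0 h ip0l addr0. Qed.
Lemma ipNl u w : ip (- u) w = - ip u w.
Proof. by rewrite -scaleN1r ipZl mulN1r. Qed.
Lemma ipDr u v w : ip w (u + v) = ip w u + ip w v.
Proof. by rewrite ipC ipDl !(ipC w). Qed.
Lemma ipNr u w : ip w (- u) = - ip w u.
Proof. by rewrite ipC ipNl ipC. Qed.
Lemma ipZr a u w : ip w (a *: u) = a * ip w u.
Proof. by rewrite ipC ipZl ipC. Qed.

Lemma ip_polar x y : ip x y = (`|x + y| * `|x + y| - `|x - y| * `|x - y|) * 4^-1.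
Proof.
rewrite -!expr2 -!ipp !ipDl !ipDr !ipNl !ipNr (ipC y x).
have -> : (4 : R)^-1 = 1/4 by rewrite div1r.
lra.
Qed.

Lemma ip_cvg {T} {F : set_system T} {FF : Filter F} (f g : T -> H) a b :
  f @ F --> a -> g @ F --> b -> (fun x => ip (f x) (g x)) @ F --> ip a b.
Proof.
move=> fa gb.
have -> : (fun x => ip (f x) (g x)) = (fun x =>
   (`|f x + g x| * `|f x + g x| - `|f x - g x| * `|f x - g x|) * 4^-1).
  by apply/funext => x; rewrite ip_polar.
rewrite ip_polar.
have fgD := cvg_norm (cvgD fa gb); have fgB := cvg_norm (cvgB fa gb).
move: (fgD FF FF) (fgB FF FF) => {fgD fgB} fgD fgB.
have X := (cvgM (cvgB (cvgM fgD fgD) (cvgM fgB fgB)) (cvg_cst (4:R)^-1)).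
exact: X.
Qed.

Lemma ip_young (e : R) x y : 0 < e -> 2 * e * ip x y <= `|x| ^+ 2 + e ^+ 2 * `|y| ^+ 2.
Proof.
move=> e0; have := ipp (x - e *: y).
rewrite !ipDl !ipDr !ipNl !ipNr !ipZl !ipZr !ipp (ipC y x) => h.
have : 0 <= `|x - e *: y| ^+ 2 by rewrite sqr_ge0.
rewrite -h; nra.
Qed.
End IP.

Section Der.
Variables (R : realType) (H : normedModType R) (ip : H -> H -> R).
Hypothesis hip : is_inner_product ip.

Lemma ip_derive (u : R -> H) (t : R) (du : H) : is_derive t (1:R) u du ->
  is_derive t (1:R) (fun s => ip (u s) (u s)) (2 * ip du (u t)).
Proof.
move=> [du1 du2].
have key : (fun h : R => h^-1 *: (((fun s => ip (u s) (u s)) \o shift t) (h *: 1)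
     - ip (u t) (u t))) @ 0^' --> 2 * ip du (u t).
  have -> : (fun h : R => h^-1 *: (((fun s => ip (u s) (u s)) \o shift t) (h *: 1)
     - ip (u t) (u t))) = (fun h => ip (h^-1 *: ((u \o shift t) (h *: 1) - u t))
        ((u \o shift t) (h *: 1) + u t)).
    apply/funext => h /=.
    rewrite (ipZl hip) !(ipDl hip) !(ipDr hip) !(ipNl hip) ?(ipNr hip).
    rewrite (ipC hip (u t) (u (h%:A + t))) -[LHS]/(h^-1 * _); congr (_ * _); lra.
  have -> : 2 * ip du (u t) = ip du (u t + u t).
    by rewrite (ipDr hip); lra.
  apply: (ip_cvg hip); first by rewrite -du2; exact: du1.
  apply: cvgD; last exact: cvg_cst.
  suff : {for 0, continuous (fun h : R => u (h *: 1 + t))}.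
    by move=> /continuous_withinNx; rewrite scale0r add0r.
  exact/differentiable_continuous/derivable1_diffP/(derivable1P _ _ _).1.
split; first by apply/cvg_ex; exists (2 * ip du (u t)).
exact: cvg_lim key.
Qed.
End Der.
Lemma small_pow (R : realType) (c0 p eps x : R) : 0 < c0 -> 1 < p -> 0 < eps ->
  0 <= x -> x <= powR (eps / c0) (p - 1)^-1 -> c0 * powR x p <= eps * x.
Proof.
move=> c00 p1 e0 x0 xd.
have p10 : 0 < p - 1 by rewrite subr_gt0.
have [->|xn0] := eqVneq x 0.
  by rewrite powR0 ?mulr0 ?mulr0 //; apply/eqP => p0; move: p1; rewrite p0; lra.
have -> : p = (p - 1) + 1 by lra.
rewrite powRD; last by rewrite xn0 implybT.
rewrite powRr1 //.
have : powR x (p - 1) <= powR (powR (eps / c0) (p - 1)^-1) (p - 1).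
  by apply: ge0_ler_powR => //; rewrite ?nnegrE ?powR_ge0 // ltW.
rewrite -powRrM mulVf ?gt_eqF // powRr1; last by rewrite divr_ge0 // ltW.
move=> h.
have : c0 * powR x (p - 1) <= eps.
  have ci : 0 < c0^-1 by rewrite invr_gt0.
  rewrite -(ler_pM2l ci) mulrA mulVf ?gt_eqF // mul1r mulrC.
  by [].
move=> h2; rewrite mulrA; apply: ler_wpM2r => //.
Qed.

Theorem theorem3 (R : realType) (H : completeNormedModType R)
  (ip : H -> H -> R) (A : R -> {linear H -> H}) (F : R -> H -> H)
  (k c0 p : R) :
  is_inner_product ip ->
  0 < k -> 0 < c0 -> 1 < p ->
  (forall t, 0 <= t -> bounded_op (A t)) ->
  (forall t u, 0 <= t -> ip (A t u) u <= - k * `|u| ^+ 2) ->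
  (forall t u, 0 <= t -> `|F t u| <= c0 * powR `|u| p) ->
  forall eps : R, 0 < eps -> eps < k ->
  exists delta : R, 0 < delta /\
    forall (u0 : H) (u : R -> H),
      `|u0| < delta ->
      u 0 = u0 ->
      {within `[0, +oo[, continuous u} ->
      (forall t : R, 0 < t -> is_derive t (1 : R) u (A t (u t) + F t (u t))) ->
      exists C T : R, forall t, T <= t -> `|u t| <= C * expR (- (k - eps) * t).
Proof.
move=> hip k0 c00 p1 _ Adiss Fbd eps e0 ek.
set a := k - eps.
have a0 : 0 < a by rewrite subr_gt0.
set delta := powR (eps / c0) (p - 1)^-1.
exists delta; split; first by apply: powR_gt0; rewrite divr_gt0.
move=> u0 u u0d u00 cu du.
have K1 t v : 0 <= t -> `|v| <= delta -> `|F t v| <= eps * `|v|.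
  move=> t0 vd; apply: le_trans (Fbd t v t0) _; exact: small_pow.
set h := fun s : R => ip (u s) (u s) * expR (2 * a * s).
have hder (t : R) : 0 < t -> is_derive t (1:R) h
    (ip (u t) (u t) * (expR (2 * a * t) * (2 * a)) +
     expR (2 * a * t) * (2 * ip (A t (u t) + F t (u t)) (u t))).
  move=> t0.
  have l1 : is_derive t (1:R) (fun s : R => 2 * a * s) (2 * a).
    have -> : (fun s : R => 2 * a * s) = (2 * a) \*: id by apply/funext.
    have HH := (is_deriveZ (2 * a) (is_derive_id t (1:R))).
    have e : (2 * a)%:A = 2 * a :> R by rewrite /GRing.scale /= mulr1.
    by rewrite e in HH.
  have e1 : is_derive t (1:R) (fun s : R => expR (2 * a * s)) (expR (2 * a * t) * (2 * a)).
    exact: (is_derive1_comp (f := expR) (g := fun s : R => 2 * a * s)).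
  have g1 := ip_derive hip (du t t0).
  have -> : h = (fun s : R => ip (u s) (u s)) * (fun s : R => expR (2 * a * s)).
    by apply/funext.
  have := is_deriveM g1 e1.
  move=> H1.
  have e x y : x *: y = x * y :> R by [].
  rewrite !e in H1; exact H1.
have hneg (t : R) : 0 < t -> `|u t| <= delta -> derive1 h t <= 0.
  move=> t0 ud; rewrite derive1E; have [_ ->] := hder t t0.
  rewrite (ipDl hip) (ipp hip).
  have hA := Adiss t (u t) (ltW t0).
  have hF := K1 t (u t) (ltW t0) ud.
  have hY := ip_young hip (F t (u t)) (u t) e0.
  have nF := normr_ge0 (F t (u t)).
  have nu := normr_ge0 (u t).
  have hF2 : `|F t (u t)| ^+ 2 <= eps ^+ 2 * `|u t| ^+ 2.
    by rewrite -exprMn; apply: lerXn2r; rewrite ?nnegrE ?mulr_ge0 // ltW.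
  have hIF : ip (F t (u t)) (u t) <= eps * `|u t| ^+ 2.
    have : 2 * eps * ip (F t (u t)) (u t) <= 2 * eps * (eps * `|u t| ^+ 2).
      by apply: le_trans hY _; lra.
    by rewrite ler_pM2l // mulr_gt0.
  have E0 := expR_gt0 (2 * a * t).
  set E := expR (2 * a * t) in E0 *.
  set N := `|u t| ^+ 2 in hA hIF *.
  have : N * (2 * a) + 2 * (ip (A t (u t)) (u t) + ip (F t (u t)) (u t)) <= 0.
    rewrite /a; lra.
  move=> h1; have := ler_wpM2l (ltW E0) h1; rewrite mulr0; lra.
have hcont (T : R) : {within `[0, T], continuous h}.
  have cuT : {within `[0, T], continuous u}.
    apply: continuous_subspaceW cu => z /=; rewrite !in_itv /= => /andP[-> _].
    by [].
  apply/subspace_continuousP => x xA.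
  move/subspace_continuousP: cuT => /(_ x xA) ux.
  apply: cvgM; first exact: (ip_cvg hip ux ux).
  apply: cvg_within_filter.
  apply: (@cvg_comp _ _ _ (fun s : R => 2 * a * s) expR _ (nbhs (2 * a * x))); last exact: continuous_expR.
  exact: (cvgM (cvg_cst _) cvg_id).
have mono (T : R) : 0 <= T -> (forall s, 0 < s < T -> `|u s| <= delta) -> h T <= h 0.
  move=> T0 hs.
  apply: (@ler0_derive1_nincr R h 0 T) => //.
  - move=> x; rewrite in_itv /= => /andP[x0 _].
    by have [? _] := hder x x0.
  - move=> x xi; rewrite in_itv /= in xi; case/andP: (xi) => x0 _.
    exact: hneg x x0 (hs x xi).
have h0 : h 0 = `|u0| ^+ 2 by rewrite /h mulr0 expR0 mulr1 (ipp hip) u00.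
have small (t : R) : 0 <= t -> `|u t| < delta.
  move=> t0; rewrite ltNge; apply/negP => bad.
  pose S := [set s : R | 0 <= s /\ delta <= `|u s|].
  have lbS : lbound S 0 by move=> s [].
  have hlS : has_lbound S by exists 0.
  have neS : S !=set0 by exists t.
  have ts0 : 0 <= inf S := lb_le_inf neS lbS.
  have tsle s : S s -> inf S <= s := fun Ss => ge_inf hlS Ss.
  set ts := inf S in ts0 tsle.
  have Sts : delta <= `|u ts|.
    rewrite leNgt; apply/negP => lt.
    have ctsu : u @ within `[0, +oo[ (nbhs ts) --> u ts.
      move/subspace_continuousP: cu; apply.
      by rewrite /= in_itv /= ts0.
    move: ctsu => /cvgr_dist_lt /(_ (delta - `|u ts|)).
    rewrite subr_gt0 => /(_ lt).
    rewrite near_withinE => /nbhs_ballP [r r0 hr].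
    have : ts + r <= ts.
      rewrite {2}/ts; apply: (lb_le_inf neS) => s [s0 ds].
      rewrite leNgt; apply/negP => sr.
      have sts := tsle s (conj s0 ds).
      have bs : ball ts r s.
        rewrite -ball_normE /= ler0_norm; first by lra.
        by rewrite subr_le0.
      have := hr s bs; rewrite /= in_itv /= s0 => /(_ isT) hlt.
      have tri := ler_normD (u ts) (u s - u ts).
      rewrite addrC subrK in tri.
      rewrite distrC in hlt.
      lra.
    by rewrite /= in r0; lra.
  have tsp : 0 < ts.
    rewrite lt_neqAle ts0 andbT; apply/eqP => e.
    by move: Sts; rewrite -e u00 => Sts; lra.
  have : h ts <= h 0.
    apply: mono (ltW tsp) _ => s /andP[s0 sts].
    rewrite leNgt; apply/negP => ds.
    have := tsle s (conj (ltW s0) (ltW ds)); lra.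
  rewrite h0 /h (ipp hip).
  have E1 := expR_ge1Dx (2 * a * ts).
  have Ea : 0 <= 2 * a * ts by rewrite mulr_ge0 // mulr_ge0 // ltW.
  have nu0 := normr_ge0 u0.
  have dp : 0 < delta by apply: le_lt_trans nu0 u0d.
  nra.
exists `|u0|, 0 => t t0.
have ht := mono t t0 (fun s hs => ltW (small s (ltW (andP hs).1))).
rewrite h0 /h (ipp hip) in ht.
have X0 := expR_gt0 (- a * t).
have E0 := expR_gt0 (2 * a * t).
have hE : expR (2 * a * t) * (expR (- a * t) * expR (- a * t)) = 1.
  by rewrite -!expRD (_ : _ + _ = 0) ?expR0 //; ring.
set X := expR (- a * t) in X0 hE *.
set E := expR (2 * a * t) in E0 hE ht.
have nu := normr_ge0 (u t); have nu0 := normr_ge0 u0.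
have h2 : `|u t| ^+ 2 <= (`|u0| * X) ^+ 2.
  have := ler_wpM2r (ltW (mulr_gt0 X0 X0)) ht.
  rewrite -mulrA hE mulr1 => h3; apply: le_trans h3 _.
  by rewrite exprMn expr2.
have nX : 0 <= `|u0| * X by rewrite mulr_ge0 // ltW.
by rewrite ler_sqr ?nnegrE in h2.
Qed.
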